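(* Let $m\ge 3$. Call $\mathbf{x}=(x_1,\ldots,x_m)\in\mathbb{R}^m$ generic if the $\binom{m}{2}$ midpoints $x_{ij}:=(x_i+x_j)/2$, $1\le i<j\le m$, are pairwise distinct (in particular the $x_i$ are pairwise distinct). For such $\mathbf{x}$ define its ranking pattern $$\mathrm{RP}^{\mathrm{UF}}(\mathbf{x})=\{(i_1\cdots i_m)\in\mathbb{P}_m:\ |y-x_{i_1}|<|y-x_{i_2}|<\cdots<|y-x_{i_m}|\text{ for some }y\in\mathbb{R}\},$$ where $\mathbb{P}_m$ is the set of permutations $(i_1\cdots i_m)$ of $[m]=\{1,\ldots,m\}$. Let $$r(m)=\bigl|\{\mathrm{RP}^{\mathrm{UF}}(\mathbf{x}):\ \mathbf{x}\in\mathbb{R}^m\text{ generic}\}\bigr|,\qquad r_0(m)=\bigl|\{\mathrm{RP}^{\mathrm{UF}}(\mathbf{x}):\ \mathbf{x}\in\mathbb{R}^m\text{ generic},\ x_1<\cdots<x_m\}\bigr|.$$ Let $\mathcal{M}_m$ be the mid-hyperplane arrangement in $\mathbb{R}^m$ consisting of the hyperplanes $\{x_i=x_j\}$ for $1\le i<j\le m$ together with the hyperplanes $\{x_i+x_j=x_k+x_l\}$ for all $(i,j,k,l)$ with $i,j,k,l$ pairwise distinct, $1\le i<j\le m$, $i<k<l\le m$. Then $$r(m)=\frac{m!}{2}\,r_0(m)=\frac{|\mathrm{ch}(\mathcal{M}_m)|}{2},$$ where $\mathrm{ch}(\mathcal{M}_m)$ denotes the set of chambers (connected components of the complement of the union of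 the hyperplanes) of $\mathcal{M}_m$.
   Context: Generic $\mathbf{x}$ are exactly the points of $\mathbb{R}^m$ not lying on any hyperplane of $\mathcal{M}_m$. *)

(* Defs.v *)
From HB Require Import structures.
From mathcomp Require Import all_boot all_order all_algebra all_fingroup.
From mathcomp Require Import all_classical all_reals all_analysis.
Set Implicit Arguments. Unset Strict Implicit. Unset Printing Implicit Defensive.
Import Order.TTheory GRing.Theory Num.Theory.
Import numFieldNormedType.Exports.
Local Open Scope ring_scope.
Local Open Scope classical_set_scope.

(* Points of R^m are row vectors 'rV[R]_m; coordinates x_i = x ord0 i,
   indices are 0-based ('I_m) instead of 1-based. *)
Definition coord (R : realType) m (x : 'rV[R]_m) (i : 'I_m) : R := x ord0 i.

Definition generic (R : realType) m (x : 'rV[R]_m) : Prop :=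
  forall i j k l : 'I_m, (i < j)%N -> (k < l)%N -> (i, j) <> (k, l) ->
    (coord x i + coord x j) / 2 <> (coord x k + coord x l) / 2.

(* A permutation s : 'S_m encodes (i_1 ... i_m) with i_(k+1) = s k. *)
Definition ranking_pattern (R : realType) m (x : 'rV[R]_m) : {set 'S_m} :=
  [set s : 'S_m | `[< exists y : R, forall k l : 'I_m, (k < l)%N ->
        `|y - coord x (s k)| < `|y - coord x (s l)| >]].

Definition r (R : realType) m : nat :=
  #|[set P : {set 'S_m} | `[< exists x : 'rV[R]_m, generic x /\ ranking_pattern x = P >]]|.

Definition r0 (R : realType) m : nat :=
  #|[set P : {set 'S_m} | `[< exists x : 'rV[R]_m, generic x /\
        (forall i j : 'I_m, (i < j)%N -> coord x i < coord x j) /\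
        ranking_pattern x = P >]]|.

Definition on_mid_arrangement (R : realType) m (x : 'rV[R]_m) : Prop :=
  (exists i j : 'I_m, (i < j)%N /\ coord x i = coord x j) \/
  (exists i j k l : 'I_m,
      [/\ uniq [:: i; j; k; l], (i < j)%N, (i < k)%N & (k < l)%N] /\
      coord x i + coord x j = coord x k + coord x l).

Definition mid_complement (R : realType) m : set 'rV[R]_m :=
  [set x | ~ on_mid_arrangement x].
Arguments mid_complement R m : clear implicits.

Definition chambers (R : realType) m : set (set 'rV[R]_m) :=
  [set C | exists2 x, mid_complement R m x &
                      C = connected_component (mid_complement R m) x].
Arguments chambers R m : clear implicits.
Arguments r R m : clear implicits.
Arguments r0 R m : clear implicits.

(* Main.v *)
Require Import Defs.
From HB Require Import structures.
From mathcomp Require Import all_boot all_order all_algebra all_fingroup.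
From mathcomp Require Import all_classical all_reals all_analysis.
From mathcomp Require Import ring lra zify.
Set Implicit Arguments. Unset Strict Implicit. Unset Printing Implicit Defensive.
Import Order.TTheory GRing.Theory Num.Theory.
Import numFieldNormedType.Exports.

Section Work.
Local Open Scope ring_scope.
Variable R : realType.
Variable m : nat.
Hypothesis hm : (3 <= m)%N.
Implicit Types x : 'rV[R]_m.
Local Notation co := Defs.coord.


Definition gen' x := forall a b c d : 'I_m, a != b -> c != d -> (a,b) != (c,d) ->
  (a,b) != (d,c) -> co x a + co x b != co x c + co x d.

Lemma exists_third (a b : 'I_m) : exists c : 'I_m, (c != a) && (c != b).
Proof.
case: (pickP (fun c : 'I_m => (c != a) && (c != b))) => [c Hc|H]; first by exists c.
have: ([set: 'I_m] \subset [set a; b]).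
  apply/fintype.subsetP => c _; rewrite !inE; move: (H c) => /negbT.
  by rewrite negb_and !negbK => /orP[]->; rewrite ?orbT.
move/subset_leq_card; rewrite cardsT card_ord cards2 => Hc.
have : (m <= 2)%N by apply: (leq_trans Hc); case: (a != b).
by rewrite leqNgt hm.
Qed.

Lemma gen'_inj x : gen' x -> injective (co x).
Proof.
move=> g a b eab; apply/eqP; apply: contraT => nab.
have [c /andP[ca cb]] := exists_third a b.
have h1 : a != c by rewrite eq_sym.
have h2 : b != c by rewrite eq_sym.
have h3 : (a, c) != (b, c) by rewrite xpair_eqE negb_and nab.
have h4 : (a, c) != (c, b) by rewrite xpair_eqE negb_and h1.
by have := g a c b c h1 h2 h3 h4; rewrite eab eqxx.
Qed.

Lemma gen'_generic x : generic x <-> gen' x.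
Proof.
split=> [g|g].
  have base : forall a b c d : 'I_m, (a < b)%N -> (c < d)%N -> (a,b) != (c,d) ->
     co x a + co x b != co x c + co x d.
    move=> a b c d ab cd /eqP ne; apply/eqP => E; apply: (g a b c d ab cd ne).
    by rewrite E.
  move=> a b c d ab cd n1 n2.
  have sw : forall u v : 'I_m, u != v -> (u < v)%N \/ (v < u)%N.
    by move=> u v; rewrite neq_ltn => /orP.
  case: (sw _ _ ab) => hab; case: (sw _ _ cd) => hcd.
  - exact: base.
  - by rewrite [co x c + _]addrC; apply: base.
  - rewrite [co x a + _]addrC; apply: base => //.
    by apply: contra n2; rewrite !xpair_eqE => /andP[/eqP-> /eqP->]; rewrite !eqxx.
  - rewrite [co x a + _]addrC [co x c + _]addrC; apply: base => //.
    by apply: contra n1; rewrite !xpair_eqE => /andP[/eqP-> /eqP->]; rewrite !eqxx.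
move=> i j k l ij kl ne E.
have : co x i + co x j != co x k + co x l.
  apply: g.
  - by rewrite neq_ltn ij.
  - by rewrite neq_ltn kl.
  - by apply/eqP.
  - rewrite xpair_eqE; apply/negP => /andP[/eqP il /eqP jk].
    by move: ij kl; rewrite il jk => a b; have := ltn_trans a b; rewrite ltnn.
by rewrite (mulIf _ E) ?eqxx // invr_eq0 pnatr_eq0.
Qed.


Lemma on_mid2 x (u v : 'I_m) : u != v -> co x u = co x v -> on_mid_arrangement x.
Proof.
move=> uv E; left; case: (ltngtP u v) => h.
- by exists u, v.
- by exists v, u.
- by move: uv; rewrite (val_inj h) eqxx.
Qed.

Lemma on_mid4 x (a b c d : 'I_m) : a!=b -> a!=c -> a!=d -> b!=c -> b!=d -> c!=d ->
  co x a + co x b = co x c + co x d -> on_mid_arrangement x.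
Proof.
wlog ab : a b / (a < b)%N.
  move=> W h1 h2 h3 h4 h5 h6 E; case: (ltngtP a b) => h.
  - exact: (W a b h h1 h2 h3 h4 h5 h6 E).
  - by apply: (W b a h) => //; try (rewrite eq_sym //); rewrite addrC.
  - by move: h1; rewrite (val_inj h) eqxx.
wlog cd : c d / (c < d)%N.
  move=> W h1 h2 h3 h4 h5 h6 E; case: (ltngtP c d) => h.
  - exact: (W c d h h1 h2 h3 h4 h5 h6 E).
  - by apply: (W d c h) => //; try (rewrite eq_sym //); rewrite [co x d + _]addrC.
  - by move: h6; rewrite (val_inj h) eqxx.
wlog ac : a b c d ab cd / (a < c)%N.
  move=> W h1 h2 h3 h4 h5 h6 E; case: (ltngtP a c) => h.
  - exact: (W a b c d ab cd h h1 h2 h3 h4 h5 h6 E).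
  - by apply: (W c d a b cd ab h) => //; rewrite eq_sym.
  - by move: h2; rewrite (val_inj h) eqxx.
move=> h1 h2 h3 h4 h5 h6 E; right; exists a, b, c, d; split => //.
by rewrite /= !inE !negb_or h1 h2 h3 h4 h5 h6.
Qed.

Lemma comp_gen x : ~ on_mid_arrangement x <-> gen' x.
Proof.
split=> [H|g].
  move=> a b c d ab cd n1 n2; apply/eqP => E; apply: H.
  case: (eqVneq a c) => [ac|ac].
    subst c; apply: (@on_mid2 _ b d); last by apply: (addrI (co x a)).
    by apply: contra n1 => /eqP->.
  case: (eqVneq a d) => [ad|ad].
    subst d; apply: (@on_mid2 _ b c); last by apply: (addrI (co x a)); rewrite E addrC.
    by apply: contra n2 => /eqP->.
  case: (eqVneq b c) => [bc|bc].
    subst c; apply: (@on_mid2 _ a d); last by apply: (addIr (co x b)); rewrite E addrC.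
    by apply: contra n2 => /eqP->.
  case: (eqVneq b d) => [bd|bd].
    subst d; apply: (@on_mid2 _ a c); last by apply: (addIr (co x b)).
    by apply: contra n1 => /eqP->.
  by apply: (@on_mid4 _ a b c d).
case=> [[i [j [ij E]]]|[i [j [k [l [[U ij ik kl] E]]]]]].
  by move: ij; rewrite (gen'_inj g E) ltnn.
have h1 : i != j by apply: contraTneq U => ->; rewrite /= !inE eqxx.
have h2 : i != k by apply: contraTneq U => ->; rewrite /= !inE eqxx !orbT.
have h3 : i != l by apply: contraTneq U => ->; rewrite /= !inE eqxx !orbT.
have h6 : k != l by apply: contraTneq U => ->; rewrite /= !inE eqxx /= ?andbF.
have := g i j k l h1 h6; rewrite !xpair_eqE !negb_and h2 h3 => /(_ isT isT).
by rewrite E eqxx.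
Qed.


Definition mid x (p : 'I_m * 'I_m) := co x p.1 + co x p.2.
Definition rel2 (p q : 'I_m * 'I_m) := (p.1 == p.2) == (q.1 == q.2).
Definition Sg x : {ffun ('I_m * 'I_m) * ('I_m * 'I_m) -> bool} :=
  [ffun pq => rel2 pq.1 pq.2 && (mid x pq.1 < mid x pq.2)].

Lemma SgP x x' : Sg x = Sg x' <->
  forall p q, rel2 p q -> (mid x p < mid x q) = (mid x' p < mid x' q).
Proof.
split=> [E p q r|H]; last by apply/ffunP => -[p q]; rewrite !ffunE /=; case r: (rel2 p q) => //=; apply: H.
by have := congr1 (fun f : {ffun _ -> bool} => f (p, q)) E; rewrite !ffunE /= r.
Qed.

Lemma gen'_mid x p q : gen' x -> rel2 p q -> p != q -> p != (q.2, q.1) ->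
  mid x p != mid x q.
Proof.
case: p q => a b [c d] g; rewrite /rel2 /mid /= => r n1 n2.
case: (eqVneq a b) n1 n2 r => [<-|ab] n1 n2 /=.
  case: (eqVneq c d) n1 n2 => [<-|//] n1 n2 _; apply/eqP => E.
  have E' : co x a = co x c by lra.
  by move: n1; rewrite (gen'_inj g E') eqxx.
case: (eqVneq c d) => [//|cd] _.
exact: g.
Qed.

Lemma coN x i : co (- x) i = - co x i.
Proof. by rewrite /Defs.coord mxE. Qed.

Lemma midN x p : mid (- x) p = - mid x p.
Proof. by rewrite /mid !coN opprD. Qed.

Lemma gen'N x : gen' x -> gen' (- x).
Proof.
move=> g a b c d h1 h2 h3 h4; rewrite !coN -!opprD.
by rewrite (inj_eq oppr_inj) g.
Qed.

Lemma SgN x : Sg (- x) = [ffun pq => Sg x (pq.2, pq.1)].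
Proof.
apply/ffunP => -[p q]; rewrite !ffunE /= !midN ltrN2.
by rewrite /rel2 eq_sym.
Qed.


Local Open Scope classical_set_scope.

Lemma comp_iff x : mid_complement R m x <-> gen' x.
Proof. exact: comp_gen. Qed.

Lemma co_seg x x' t i : co (x + t *: (x' - x)) i = co x i + t * (co x' i - co x i).
Proof. by rewrite /Defs.coord !mxE. Qed.

Lemma cont_co i (w : 'rV[R]_m) : {for w, continuous (fun z : 'rV[R]_m => co z i)}.
Proof. exact: coord_continuous. Qed.

Lemma cont_midd p q : continuous (fun z : 'rV[R]_m => mid z q - mid z p).
Proof.
move=> z.
have hm' : forall p, continuous (fun z : 'rV[R]_m => mid z p).
  move=> r w; exact: (@cvgD _ _ _ _ _ (fun z : 'rV[R]_m => co z r.1) (fun z => co z r.2) _ _ (@cont_co r.1 w) (@cont_co r.2 w)).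
exact: (@cvgB _ _ _ _ _ (fun z : 'rV[R]_m => mid z q) (fun z => mid z p) _ _ (hm' q z) (hm' p z)).
Qed.


Lemma subr_gt0_tmp (u v : R) : u < v -> 0 < v - u.
Proof. by rewrite subr_gt0. Qed.

Lemma convex_pos (t u v : R) : 0 <= t -> t <= 1 -> 0 < u -> 0 < v ->
  0 < (1 - t) * u + t * v.
Proof.
move=> t0 t1 u0 v0.
have h1 : 0 <= (1 - t) * u by apply: mulr_ge0; lra.
case: (eqVneq t 0) => [->|tn0]; first by rewrite subr0 mul1r mul0r addr0.
have h2 : 0 < t * v by apply: mulr_gt0 => //; rewrite lt_neqAle eq_sym tn0.
lra.
Qed.

Lemma seg_key (t a b c d a' b' c' d' : R) :
  (c + t * (c' - c) + (d + t * (d' - d))) - (a + t * (a' - a) + (b + t * (b' - b))) =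
  (1 - t) * ((c + d) - (a + b)) + t * ((c' + d') - (a' + b')).
Proof. ring. Qed.

Lemma seg_in x x' : gen' x -> Sg x = Sg x' ->
  connected_component (mid_complement R m) x x'.
Proof.
move=> gx E.
set f := fun t : R => x + t *: (x' - x).
have cf : continuous f.
  move=> t; exact: (@cvgD _ _ _ _ _ (fun=> x) (fun t : R => t *: (x' - x)) _ _
     (@cst_continuous _ _ x t) (@cvgZr_tmp _ _ _ _ _ id t (x' - x) cvg_id)).
exists (f @` `[0, 1]); last first.
  exists 1; first by rewrite /= in_itv /= lexx ler01.
  by rewrite /f scale1r addrC subrK.
split.
- exists 0; first by rewrite /= in_itv /= lexx ler01.
  by rewrite /f scale0r addr0.
- move=> _ [t tI <-]; apply/comp_iff.
  move: tI; rewrite /= in_itv /= => /andP[t0 t1].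
  move=> a b c d h1 h2 h3 h4; rewrite !co_seg.
  have r : rel2 (a, b) (c, d) by rewrite /rel2 /= (negbTE h1) (negbTE h2).
  have H := (SgP x x').1 E _ _ r.
  have r' : rel2 (c, d) (a, b) by rewrite /rel2 eq_sym.
  have H' := (SgP x x').1 E _ _ r'.
  have := gx a b c d h1 h2 h3 h4.
  move: H H'; rewrite /mid /=; clear E gx r h3 h4 cf.
  case: (ltrgtP (co x a + co x b) (co x c + co x d)) => [lt1|lt1|] //= /esym H /esym H' _.
    apply/eqP => Eq.
    have := convex_pos t0 t1 (subr_gt0_tmp lt1) (subr_gt0_tmp H).
    by rewrite -seg_key Eq subrr ltxx.
  apply/eqP => Eq.
  have := convex_pos t0 t1 (subr_gt0_tmp lt1) (subr_gt0_tmp H').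
  by rewrite -seg_key Eq subrr ltxx.
- apply: connected_continuous_connected; first exact: segment_connected.
  exact: continuous_subspaceT.
Qed.


Lemma comp_sg x x' : gen' x -> connected_component (mid_complement R m) x x' ->
  Sg x = Sg x'.
Proof.
move=> gx Cx'.
set C := connected_component (mid_complement R m) x.
have Csub : C `<=` mid_complement R m by apply: connected_component_sub.
have Cc : connected C by apply: component_connected.
have Cx : C x by apply: connected_component_refl; apply/comp_iff.
have gC : forall w, C w -> gen' w by move=> w /Csub/comp_iff.
have key : forall p q, rel2 p q -> forall u v, C u -> C v ->
    mid u p < mid u q -> mid v p < mid v q.
  move=> p q r u v Cu Cv lt.
  case: (boolP ((p == q) || (p == (q.2, q.1)))) => [/orP[/eqP pq|/eqP pq]|npq].
  - by move: lt; rewrite pq ltxx.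
  - by move: lt; rewrite pq /mid /= addrC ltxx.
  move: npq; rewrite negb_or => /andP[n1 n2].
  have nz : forall w, C w -> mid w q - mid w p != 0.
    by move=> w /gC g; rewrite subr_eq0 eq_sym gen'_mid.
  have I := (connected_intervalP _).1 (connected_continuous_connected Cc
     (continuous_subspaceT (@cont_midd p q))).
  rewrite -subr_gt0; apply: contraT; rewrite -leNgt => le.
  have [w Cw w0] : ((fun z => mid z q - mid z p) @` C) 0.
    apply: (I (mid v q - mid v p) (mid u q - mid u p)); [by exists v|by exists u|].
    by apply/andP; split => //; apply: ltW; rewrite subr_gt0.
  by have := nz w Cw; rewrite w0 eqxx.
apply/SgP => p q r; apply/idP/idP; [exact: key | exact: (key p q r x' x)].
Qed.


Lemma rpP x (s : 'S_m) : reflect (exists y : R, forall k l : 'I_m, (k < l)%N ->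
   `|y - co x (s k)| < `|y - co x (s l)|) (s \in ranking_pattern x).
Proof. by rewrite inE; apply: asboolP. Qed.

Lemma dist1 (y a b : R) : a < b -> (`|y - a| < `|y - b|) = (2 * y < a + b).
Proof.
move=> ab; have [ya|ya] := lerP a y; have [yb|yb] := lerP b y;
  rewrite ?(ger0_norm (y - a)) ?(ger0_norm (y - b)) ?(ltr0_norm (y - a)) ?(ltr0_norm (y - b))
   ?subr_ge0 ?subr_lt0 //; apply/idP/idP; lra.
Qed.

Lemma dist2 (y a b : R) : b < a -> (`|y - a| < `|y - b|) = (a + b < 2 * y).
Proof.
move=> ab; have [ya|ya] := lerP a y; have [yb|yb] := lerP b y;
  rewrite ?(ger0_norm (y - a)) ?(ger0_norm (y - b)) ?(ltr0_norm (y - a)) ?(ltr0_norm (y - b))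
   ?subr_ge0 ?subr_lt0 //; apply/idP/idP; lra.
Qed.

Lemma perm_sorted_lt (f : 'I_m -> R) (s : 'S_m) :
  (forall k l : 'I_m, (k < l)%N -> f (s k) < f (s l)) ->
  forall a b, (f a < f b) = ((s^-1)%g a < (s^-1)%g b)%N.
Proof.
move=> H a b; apply/idP/idP => [lt|]; last first.
  by move/H; rewrite !permKV.
rewrite ltnNge leq_eqVlt; apply/negP => /orP[/eqP E|E].
  by move: lt; rewrite (perm_inj (val_inj E)) ltxx.
by have := H _ _ E; rewrite !permKV => /(lt_trans lt); rewrite ltxx.
Qed.

Lemma rp_pos x (s : 'S_m) (y : R) : (forall k l : 'I_m, (k < l)%N ->
   `|y - co x (s k)| < `|y - co x (s l)|) ->
  forall a b, (`|y - co x a| < `|y - co x b|) = ((s^-1)%g a < (s^-1)%g b)%N.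
Proof. by move=> H; apply: (@perm_sorted_lt (fun i => `|y - co x i|)). Qed.

Lemma normN2 (y c : R) : `|y - - c| = `|- y - c|.
Proof. by rewrite -normrN; congr (`|_|); ring. Qed.

Lemma rpN x : ranking_pattern (- x) = ranking_pattern x.
Proof.
apply/setP => s; apply/rpP/rpP => -[y H]; exists (- y) => k l kl.
  by have := H k l kl; rewrite !coN !normN2.
by rewrite !coN !normN2 opprK; apply: H.
Qed.

Lemma sortP (f : 'I_m -> R) : injective f ->
  exists s : 'S_m, forall k l : 'I_m, (k < l)%N -> f (s k) < f (s l).
Proof.
move=> finj.
pose rk i := #|[pred j | f j < f i]|.
have rklt : forall i, (rk i < m)%N.
  move=> i; have := cardC [pred j | f j < f i]; rewrite card_ord => E.
  have : (0 < #|[predC [pred j | (f j < f i)%R]]|)%N.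
    by apply/card_gt0P; exists i; rewrite !inE ltxx.
  by move=> h; rewrite /rk -[X in (_ < X)%N]E -addn1 leq_add2l.
have mono : forall i j, f i < f j -> (rk i < rk j)%N.
  move=> i j lt; apply: proper_card; apply/properP; split.
    by apply/fintype.subsetP => k; rewrite !inE => /lt_trans; apply.
  by exists i; rewrite !inE ?lt ?ltxx.
pose rko i := Ordinal (rklt i).
have rkinj : injective rko.
  move=> i j /(congr1 val) /= E; apply/eqP; apply: contraT => ij.
  have : f i != f j by rewrite (inj_eq finj).
  by rewrite neq_lt => /orP[/mono|/mono]; rewrite E ltnn.
exists (perm rkinj)^-1%g => k l kl.
set i := (perm rkinj)^-1%g k; set j := (perm rkinj)^-1%g l.
have ei : rko i = k by rewrite -[RHS](permKV (perm rkinj) k) permE.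
have ej : rko j = l by rewrite -[RHS](permKV (perm rkinj) l) permE.
case: (ltrgtP (f i) (f j)) => // [/mono|/finj E].
  by move: kl; rewrite -ei -ej /= => /ltn_trans h /h; rewrite ltnn.
by move: kl; rewrite -ei -ej E ltnn.
Qed.


Lemma below (B : seq R) : exists w : R, forall b, b \in B -> w < b.
Proof.
elim: B => [|b B [w' H]]; first by exists 0.
case: (ltrP w' b) => wb.
  by exists w' => c; rewrite inE => /orP[/eqP->//|/H].
exists (b - 1) => c; rewrite inE => /orP[/eqP->|/H h]; lra.
Qed.

Lemma above1 (a : R) (B : seq R) : (forall b, b \in B -> a < b) ->
  exists w, a < w /\ forall b, b \in B -> w < b.
Proof.
elim: B => [|b B IH] H; first by exists (a + 1); split => //; lra.
have [|w'' [aw'' Hw'']] := IH; first by move=> c cB; apply: H; rewrite inE cB orbT.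
have ab : a < b by apply: H; rewrite inE eqxx.
case: (ltrP w'' ((a + b) / 2)) => wl.
  exists w''; split => // c; rewrite inE => /orP[/eqP->|/Hw'' //]; lra.
exists ((a + b) / 2); split; first lra.
move=> c; rewrite inE => /orP[/eqP->|/Hw'' h]; lra.
Qed.

Lemma gap (A B : seq R) : (forall a b, a \in A -> b \in B -> a < b) ->
  exists w, (forall a, a \in A -> a < w) /\ (forall b, b \in B -> w < b).
Proof.
elim: A => [|a A IH] H.
  by have [w Hw] := below B; exists w; split.
have [|w' [Aw' Bw']] := IH; first by move=> u v uA vB; apply: H; rewrite ?inE ?uA ?orbT.
case: (ltrP a w') => aw.
  by exists w'; split => // c; rewrite inE => /orP[/eqP->|/Aw'].
have [|w [aw2 Bw]] := above1 (a := a) (B := B); first by move=> b bB; apply: H; rewrite ?inE ?eqxx.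
exists w; split => // c; rewrite inE => /orP[/eqP->//|/Aw' h]; lra.
Qed.

Definition NP := [seq p <- index_enum (prod 'I_m 'I_m) | p.1 != p.2].

Lemma mem_NPf (C : pred ('I_m * 'I_m)) p :
  (p \in [seq q <- NP | C q]) = C p && (p.1 != p.2).
Proof. by rewrite !mem_filter mem_index_enum andbT. Qed.

Lemma rp_sub x x' : gen' x -> gen' x' -> Sg x = Sg x' ->
  {subset ranking_pattern x <= ranking_pattern x'}.
Proof.
move=> gx gx' E s /rpP[y H].
pose A := [seq mid x' p | p <- NP & mid x p < 2 * y].
pose B := [seq mid x' p | p <- NP & 2 * y < mid x p].
have [w [Aw Bw]] : exists w, (forall a, a \in A -> a < w) /\ (forall b, b \in B -> w < b).
  apply: gap => _ _ /mapP[p pin ->] /mapP[q qin ->].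
  move: pin qin; rewrite !mem_NPf => /andP[hp np] /andP[hq nq].
  have r : rel2 p q by rewrite /rel2 (negbTE np) (negbTE nq).
  by rewrite -((SgP x x').1 E p q r); apply: lt_trans hq.
apply/rpP; exists (w / 2) => k l kl.
set a := s k; set b := s l.
have ab : a != b by rewrite (inj_eq perm_inj) -val_eqE /= neq_ltn kl.
have Hy := H k l kl; rewrite -/a -/b in Hy.
have rd : rel2 (a, a) (b, b) by rewrite /rel2 /= !eqxx.
have Ed := (SgP x x').1 E _ _ rd; rewrite /mid /= in Ed.
have rd' : rel2 (b, b) (a, a) by rewrite /rel2 /= !eqxx.
have Ed' := (SgP x x').1 E _ _ rd'; rewrite /mid /= in Ed'.
case: (ltrgtP (co x a) (co x b)) => [lt|gt|eq].
- have lt' : co x' a < co x' b.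
    have : co x a + co x a < co x b + co x b by lra.
    by rewrite Ed => h; lra.
  rewrite dist1 // in Hy; rewrite dist1 //.
  have : mid x' (a, b) \in B.
    by apply/mapP; exists (a, b) => //; rewrite mem_NPf /= ab andbT.
  by move/Bw; rewrite /mid /=; lra.
- have gt' : co x' b < co x' a.
    have : co x b + co x b < co x a + co x a by lra.
    by rewrite Ed' => h; lra.
  rewrite dist2 // in Hy; rewrite dist2 //.
  have : mid x' (a, b) \in A.
    by apply/mapP; exists (a, b) => //; rewrite mem_NPf /= ab andbT.
  by move/Aw; rewrite /mid /=; lra.
- by move: ab; rewrite (gen'_inj gx eq) eqxx.
Qed.

Lemma rp_eq x x' : gen' x -> gen' x' -> Sg x = Sg x' ->
  ranking_pattern x = ranking_pattern x'.
Proof.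
move=> gx gx' E; apply/setP => s; apply/idP/idP; first exact: rp_sub.
exact: rp_sub.
Qed.


Lemma inc_rp x (s : 'S_m) : (forall k l : 'I_m, (k < l)%N -> co x (s k) < co x (s l)) ->
  s \in ranking_pattern x.
Proof.
move=> H; have [y Hy] := below [seq co x i | i <- index_enum 'I_m].
have Hy' : forall i, y < co x i by move=> i; apply: Hy; apply: map_f; rewrite mem_index_enum.
apply/rpP; exists y => k l kl.
have := H k l kl; have := Hy' (s k); have := Hy' (s l) => h1 h2 h3.
rewrite !ltr0_norm ?subr_lt0 //; lra.
Qed.

Lemma dec_rp x (s : 'S_m) : (forall k l : 'I_m, (k < l)%N -> co x (s l) < co x (s k)) ->
  s \in ranking_pattern x.
Proof.
move=> H; have [|y [Hy _]] := gap (A := [seq co x i | i <- index_enum 'I_m]) (B := [::]) => //.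
have Hy' : forall i, co x i < y by move=> i; apply: Hy; apply: map_f; rewrite mem_index_enum.
apply/rpP; exists y => k l kl.
have := H k l kl; have := Hy' (s k); have := Hy' (s l) => h1 h2 h3.
rewrite !ger0_norm ?subr_ge0 ?ltW //; lra.
Qed.

Definition srev : 'S_m := perm (@rev_ord_inj m).

Lemma rev_lt (k l : 'I_m) : (k < l)%N -> (rev_ord l < rev_ord k)%N.
Proof. by move=> kl; have := ltn_ord l; rewrite /=; lia. Qed.

Lemma srevE (s : 'S_m) k : (srev * s)%g k = s (rev_ord k).
Proof. by rewrite permM permE. Qed.

Lemma two_ways x (s : 'S_m) : gen' x -> s \in ranking_pattern x ->
  (srev * s)%g \in ranking_pattern x ->
  (forall k l : 'I_m, (k < l)%N -> co x (s k) < co x (s l)) \/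
  (forall k l : 'I_m, (k < l)%N -> co x (s l) < co x (s k)).
Proof.
move=> g /rpP[y1 H1] /rpP[y2 H2].
have H2' : forall k l : 'I_m, (k < l)%N -> `|y2 - co x (s l)| < `|y2 - co x (s k)|.
  by move=> k l kl; have := H2 _ _ (rev_lt kl); rewrite !srevE !rev_ordK.
have key : forall k l : 'I_m, (k < l)%N -> [/\ s k != s l,
    `|y1 - co x (s k)| < `|y1 - co x (s l)| & `|y2 - co x (s l)| < `|y2 - co x (s k)|].
  move=> k l kl; split; [|exact: H1|exact: H2'].
  by rewrite (inj_eq perm_inj) -val_eqE /= neq_ltn kl.
case: (ltrgtP y1 y2) => y12; [left|right|left] => k l kl; have [ab h1 h2] := key k l kl;
  move: ab h1 h2; set a := s k; set b := s l => ab h1 h2.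
- case: (ltrgtP (co x a) (co x b)) => [//|gt|eq].
    by rewrite dist2 // in h1; rewrite dist1 // in h2; lra.
  by move: ab; rewrite (gen'_inj g eq) eqxx.
- case: (ltrgtP (co x a) (co x b)) => [lt|//|eq].
    by rewrite dist1 // in h1; rewrite dist2 // in h2; lra.
  by move: ab; rewrite (gen'_inj g eq) eqxx.
- by rewrite y12 in h1; have := lt_trans h1 h2; rewrite ltxx.
Qed.

Lemma mid_swap x a b : mid x (a, b) = mid x (b, a).
Proof. by rewrite /mid addrC. Qed.

Lemma core x x' a b c d : gen' x -> ranking_pattern x = ranking_pattern x' ->
  (forall a b, (co x a < co x b) = (co x' a < co x' b)) ->
  co x a < co x b -> co x c < co x d -> mid x (a, b) < mid x (c, d) ->
  mid x' (a, b) < mid x' (c, d).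
Proof.
move=> gx E Ho lab lcd lm.
pose L := [seq mid x p | p <- NP & mid x p <= mid x (a, b)].
pose U := [seq mid x p | p <- NP & mid x (a, b) < mid x p].
have [w [Lw Uw]] : exists w, (forall u, u \in L -> u < w) /\ (forall v, v \in U -> w < v).
  apply: gap => _ _ /mapP[p pin ->] /mapP[q qin ->].
  move: pin qin; rewrite !mem_NPf => /andP[hp _] /andP[hq _].
  exact: le_lt_trans hq.
have ab : a != b by apply: contraTneq lab => ->; rewrite ltxx.
have cd : c != d by apply: contraTneq lcd => ->; rewrite ltxx.
have hab : mid x (a, b) < w.
  by apply: Lw; apply/mapP; exists (a, b) => //; rewrite mem_NPf /= lexx ab.
have hcd : w < mid x (c, d).
  by apply: Uw; apply/mapP; exists (c, d) => //; rewrite mem_NPf /= lm cd.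
have nw : forall i j, i != j -> co x i + co x j != w.
  move=> i j ij; case: (lerP (mid x (i, j)) (mid x (a, b))) => h.
    have : mid x (i, j) < w by apply: Lw; apply/mapP; exists (i, j) => //; rewrite mem_NPf /= h ij.
    by rewrite /mid /= => /lt_eqF ->.
  have : w < mid x (i, j) by apply: Uw; apply/mapP; exists (i, j) => //; rewrite mem_NPf /= h ij.
  by rewrite /mid /= => /gt_eqF ->.
pose y := w / 2.
have ginj : injective (fun i => `|y - co x i|).
  move=> i j /= Eij; apply/eqP; apply: contraT => ij.
  have nw' := nw i j ij.
  case: (ltrgtP (co x i) (co x j)) => [lt|gt|eq].
  - have h1 := dist1 y lt; have h2 := dist2 y lt.
    rewrite Eij ltxx in h1 h2.
    move/esym/negbT: h1; move/esym/negbT: h2; rewrite -!leNgt => h2 h1.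
    have : co x i + co x j = w by rewrite /y in h1 h2; lra.
    by move/eqP; rewrite (negbTE nw').
  - have h1 := dist2 y gt; have h2 := dist1 y gt.
    rewrite Eij ltxx in h1 h2.
    move/esym/negbT: h1; move/esym/negbT: h2; rewrite -!leNgt => h2 h1.
    have : co x i + co x j = w by rewrite /y in h1 h2; lra.
    by move/eqP; rewrite (negbTE nw').
  - by move: ij; rewrite (gen'_inj gx eq) eqxx.
have [s Hs] := sortP ginj.
have sx : s \in ranking_pattern x by apply/rpP; exists y.
rewrite E in sx; case/rpP: sx => y' H'.
have P1 := rp_pos Hs; have P2 := rp_pos H'.
have oab : co x' a < co x' b by rewrite -Ho.
have ocd : co x' c < co x' d by rewrite -Ho.
have e1 : `|y - co x b| < `|y - co x a|.
  by rewrite dist2 //; move: hab; rewrite /mid /y /=; lra.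
have e2 : `|y - co x c| < `|y - co x d|.
  by rewrite dist1 //; move: hcd; rewrite /mid /y /=; lra.
rewrite P1 -P2 dist2 // in e1; rewrite P1 -P2 dist1 // in e2.
rewrite /mid /=; lra.
Qed.


Lemma core2 x x' a b c d : gen' x -> ranking_pattern x = ranking_pattern x' ->
  (forall a b, (co x a < co x b) = (co x' a < co x' b)) ->
  a != b -> c != d -> mid x (a, b) < mid x (c, d) -> mid x' (a, b) < mid x' (c, d).
Proof.
move=> gx E Ho ab cd.
case: (ltrgtP (co x a) (co x b)) => [l1|l1|e1]; last by move: ab; rewrite (gen'_inj gx e1) eqxx.
- case: (ltrgtP (co x c) (co x d)) => [l2|l2|e2]; last by move: cd; rewrite (gen'_inj gx e2) eqxx.
  + exact: core.
  + by rewrite (mid_swap x c) (mid_swap x' c); apply: core.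
- case: (ltrgtP (co x c) (co x d)) => [l2|l2|e2]; last by move: cd; rewrite (gen'_inj gx e2) eqxx.
  + by rewrite (mid_swap x a) (mid_swap x' a); apply: core.
  + by rewrite (mid_swap x a) (mid_swap x' a) (mid_swap x c) (mid_swap x' c); apply: core.
Qed.

Lemma same_order_Sg x x' : gen' x -> gen' x' -> ranking_pattern x = ranking_pattern x' ->
  (forall a b, (co x a < co x b) = (co x' a < co x' b)) -> Sg x = Sg x'.
Proof.
move=> gx gx' E Ho; apply/SgP => -[a b] [c d]; rewrite /rel2 /=.
case: (eqVneq a b) => [<-|ab] /=.
  case: (eqVneq c d) => [<-|//] _.
  have md : forall z (u v : 'I_m), (mid z (u, u) < mid z (v, v)) = (co z u < co z v).
    by move=> z u v; rewrite /mid /=; apply/idP/idP; lra.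
  by rewrite !md Ho.
case: (eqVneq c d) => [//|cd] _.
apply/idP/idP; first exact: core2.
by apply: (core2 (x:=x') (x':=x) gx' (esym E)) => // u v; rewrite Ho.
Qed.

Lemma rp_Sg x x' : gen' x -> gen' x' -> ranking_pattern x = ranking_pattern x' ->
  Sg x' = Sg x \/ Sg x' = Sg (- x).
Proof.
move=> gx gx' E.
have [s Hs] := sortP (gen'_inj gx').
have s1 : s \in ranking_pattern x' by apply: inc_rp.
have s2 : (srev * s)%g \in ranking_pattern x'.
  by apply: dec_rp => k l kl; rewrite !srevE; apply: Hs; apply: rev_lt.
rewrite -E in s1 s2; case: (two_ways gx s1 s2) => H.
  left; apply: same_order_Sg => //.
  by move=> a b; rewrite (perm_sorted_lt Hs) (perm_sorted_lt H).
right; apply: same_order_Sg => //; first exact: gen'N.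
  by rewrite rpN.
move=> a b; rewrite (perm_sorted_lt Hs) (@perm_sorted_lt (co (- x)) s) //.
by move=> k l kl; rewrite !coN ltrN2; apply: H.
Qed.


Local Notation Ft := {ffun ('I_m * 'I_m) * ('I_m * 'I_m) -> bool}.

Lemma m0 : (0 < m)%N. Proof. by apply: leq_trans hm. Qed.
Lemma m1 : (1 < m)%N. Proof. by apply: leq_trans hm. Qed.
Definition o0 : 'I_m := Ordinal m0.
Definition o1 : 'I_m := Ordinal m1.
Definition d01 := ((o0, o0), (o1, o1)).

Lemma rel_d01 : rel2 (o0, o0) (o1, o1).
Proof. by rewrite /rel2 /= !eqxx. Qed.

Lemma Sg_d01 x : Sg x d01 = (co x o0 < co x o1).
Proof. by rewrite ffunE rel_d01 /= /mid /=; apply/idP/idP; lra. Qed.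

Lemma SgN_d01 x : Sg (- x) d01 = (co x o1 < co x o0).
Proof. by rewrite ffunE rel_d01 /= !midN ltrN2 /mid /=; apply/idP/idP; lra. Qed.

Definition Simg : {set Ft} := finset (fun f => `[< exists x, gen' x /\ Sg x = f >]).

Lemma SimgP f : reflect (exists x, gen' x /\ Sg x = f) (f \in Simg).
Proof. by rewrite inE; apply: asboolP. Qed.

Definition pt (f : Ft) : 'rV[R]_m :=
  match pselect (exists x, gen' x /\ Sg x = f) with
  | left h => proj1_sig (cid h)
  | right _ => 0
  end.

Lemma ptP f : f \in Simg -> gen' (pt f) /\ Sg (pt f) = f.
Proof.
move/SimgP => h; rewrite /pt; case: pselect => [h'|//].
exact: (proj2_sig (cid h')).
Qed.

Definition Phi (f : Ft) := ranking_pattern (pt f).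

Lemma Phi_Sg x : gen' x -> Phi (Sg x) = ranking_pattern x.
Proof.
move=> g; have [] := ptP (f := Sg x) (introT (SimgP _) (ex_intro _ x (conj g erefl))).
by move=> g' E; rewrite /Phi; apply: rp_eq.
Qed.

Lemma card_half (B : {set Ft}) : B \subset Simg -> {in B, forall f : Ft, f d01} ->
  #|Phi @: B| = #|B|.
Proof.
move=> sB pB; apply: card_in_imset => f g fB gB.
have [gf Ef] := ptP (fintype.subsetP sB _ fB).
have [gg Eg] := ptP (fintype.subsetP sB _ gB).
rewrite /Phi; move: (pt f) (pt g) gf gg Ef Eg => x y gf gg Ef Eg E.
case: (rp_Sg gf gg E) => [E'|E']; first by rewrite -Eg -Ef E'.
have := pB g gB; rewrite -Eg E' SgN_d01.
by have := pB f fB; rewrite -Ef Sg_d01 => h1 h2; have := lt_trans h1 h2; rewrite ltxx.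
Qed.

Definition RPs : {set {set 'S_m}} :=
  finset (fun P => `[< exists x, gen' x /\ ranking_pattern x = P >]).

Lemma RPsP P : reflect (exists x, gen' x /\ ranking_pattern x = P) (P \in RPs).
Proof. by rewrite inE; apply: asboolP. Qed.

Definition Apos : {set Ft} := finset (fun f => (f \in Simg) && f d01).

Lemma card_Apos : #|Apos| = #|RPs|.
Proof.
rewrite -card_half; last first.
- by move=> f; rewrite inE => /andP[].
- by apply/fintype.subsetP => f; rewrite inE => /andP[].
apply: eq_card => P; apply/imsetP/RPsP.
  move=> [f]; rewrite inE => /andP[fS _] ->.
  by have [g _] := ptP fS; exists (pt f).
move=> [x [gx <-]].
case: (ltrgtP (co x o0) (co x o1)) => [lt|gt|eq].
- exists (Sg x); last by rewrite Phi_Sg.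
  by rewrite inE Sg_d01 lt andbT; apply/SimgP; exists x.
- exists (Sg (- x)); last by rewrite Phi_Sg ?rpN //; apply: gen'N.
  by rewrite inE SgN_d01 gt andbT; apply/SimgP; exists (- x); split => //; apply: gen'N.
- by have := gen'_inj gx eq => /(congr1 val).
Qed.

Definition negF (f : Ft) : Ft := [ffun pq => f (pq.2, pq.1)].

Lemma negFK : involutive negF.
Proof. by move=> f; apply/ffunP => -[p q]; rewrite !ffunE. Qed.

Lemma SgN' x : Sg (- x) = negF (Sg x).
Proof. by rewrite SgN. Qed.

Lemma card_Simg : #|Simg| = (2 * #|RPs|)%N.
Proof.
rewrite -(cardsID Apos Simg).
have -> : Simg :&: Apos = Apos.
  by apply/finset.setIidPr; apply/fintype.subsetP => f; rewrite inE => /andP[].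
have -> : Simg :\: Apos = negF @: Apos.
  apply/finset.setP => f; rewrite finset.in_setD; apply/andP/imsetP.
    move=> [nA fS]; have [x [gx Ex]] := SimgP _ fS.
    exists (Sg (- x)); last by rewrite SgN' negFK.
    rewrite inE; apply/andP; split; first by apply/SimgP; exists (- x); split => //; apply: gen'N.
    move: nA; rewrite /Apos finset.in_set fS /= -Ex Sg_d01 SgN_d01 -leNgt le_eqVlt => /orP[/eqP|//].
    by move/(gen'_inj gx) => /(congr1 val).
  move=> [g]; rewrite inE => /andP[gS gd] ->; split.
    have [x [gx Ex]] := SimgP _ gS.
    rewrite -Ex -SgN' /Apos finset.in_set SgN_d01 negb_and; apply/orP; right.
    by move: gd; rewrite -Ex Sg_d01 -leNgt => /ltW.
  have [x [gx Ex]] := SimgP _ gS.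
  by apply/SimgP; exists (- x); split; [apply: gen'N | rewrite SgN Ex].
by rewrite card_imset; [rewrite card_Apos addnn mul2n | apply: can_inj negFK].
Qed.


Definition incr x := forall i j : 'I_m, (i < j)%N -> co x i < co x j.

Definition A0 : {set Ft} :=
  finset (fun f => `[< exists x, gen' x /\ incr x /\ Sg x = f >]).

Lemma A0P f : reflect (exists x, gen' x /\ incr x /\ Sg x = f) (f \in A0).
Proof. by rewrite finset.in_set; apply: asboolP. Qed.

Definition RP0s : {set {set 'S_m}} :=
  finset (fun P => `[< exists x, gen' x /\ incr x /\ ranking_pattern x = P >]).

Lemma RP0sP P : reflect (exists x, gen' x /\ incr x /\ ranking_pattern x = P) (P \in RP0s).
Proof. by rewrite finset.in_set; apply: asboolP. Qed.

Lemma card_A0 : #|A0| = #|RP0s|.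
Proof.
rewrite -card_half; last first.
- move=> f /A0P[x [gx [ix <-]]]; rewrite Sg_d01; apply: ix => /=; exact: ltnSn.
- by apply/fintype.subsetP => f /A0P[x [gx [ix <-]]]; apply/SimgP; exists x.
apply: eq_card => P; apply/imsetP/RP0sP.
  move=> [f /A0P[x [gx [ix <-]]] ->].
  by exists x; rewrite Phi_Sg.
move=> [x [gx [ix <-]]]; exists (Sg x); last by rewrite Phi_Sg.
by apply/A0P; exists x.
Qed.

Definition permx (s : 'S_m) x : 'rV[R]_m := \row_i co x (s i).

Lemma co_permx s x i : co (permx s x) i = co x (s i).
Proof. by rewrite /Defs.coord /permx mxE. Qed.

Definition permF (s : 'S_m) (f : Ft) : Ft :=
  [ffun pq => f ((s pq.1.1, s pq.1.2), (s pq.2.1, s pq.2.2))].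

Lemma Sg_perm s x : Sg (permx s x) = permF s (Sg x).
Proof.
apply/ffunP => -[[a b] [c d]]; rewrite !ffunE /= /rel2 /mid /= !co_permx.
by rewrite !(inj_eq perm_inj).
Qed.

Lemma gen'_perm s x : gen' x -> gen' (permx s x).
Proof.
move=> g a b c d h1 h2 h3 h4; rewrite !co_permx; apply: g.
- by rewrite (inj_eq perm_inj).
- by rewrite (inj_eq perm_inj).
- by rewrite !xpair_eqE !(inj_eq perm_inj) -xpair_eqE.
- by rewrite !xpair_eqE !(inj_eq perm_inj) -xpair_eqE.
Qed.

Lemma permxK s x : permx (s^-1)%g (permx s x) = x.
Proof.
apply/matrixP => i j; rewrite (ord1 i) /permx !mxE /Defs.coord mxE.
by rewrite permKV.
Qed.

Lemma incr_lt x : incr x -> forall i j, (co x i < co x j) = (i < j)%N.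
Proof.
move=> ix i j; apply/idP/idP => [lt|]; last exact: ix.
rewrite ltnNge leq_eqVlt; apply/negP => /orP[/eqP E|E].
  by move: lt; rewrite (val_inj E) ltxx.
by have := ix _ _ E => /(lt_trans lt); rewrite ltxx.
Qed.

Lemma mono_ge (u : 'I_m -> 'I_m) : (forall i j : 'I_m, (i < j)%N -> (u i < u j)%N) ->
  forall i : 'I_m, (i <= u i)%N.
Proof.
move=> H i.
have : forall n (Hn : (n < m)%N), (n <= u (Ordinal Hn))%N.
  elim=> [//|n IH] Hn.
  have Hn' : (n < m)%N by apply: ltnW.
  have := H (Ordinal Hn') (Ordinal Hn) (ltnSn n).
  by have := IH Hn'; lia.
move/(_ i (ltn_ord i)).
by have -> : Ordinal (ltn_ord i) = i by apply: val_inj.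
Qed.

Lemma card_Simg2 : #|Simg| = (m`! * #|A0|)%N.
Proof.
have -> : Simg = (fun p => permF p.1 p.2) @: (finset.setX (finset.setT : {set 'S_m}) A0).
  apply/finset.setP => f; apply/SimgP/imsetP.
    move=> [x [gx <-]].
    have [t Ht] := sortP (gen'_inj gx).
    exists ((t^-1)%g, Sg (permx t x)).
      rewrite finset.in_setX finset.in_setT /=; apply/A0P; exists (permx t x).
      split; first exact: gen'_perm.
      by split => // i j ij; rewrite !co_permx; apply: Ht.
    by rewrite /= -Sg_perm permxK.
  move=> [[s g]]; rewrite finset.in_setX /= => /andP[_ /A0P[x [gx [ix <-]]]] ->.
  by exists (permx s x); split; [apply: gen'_perm | rewrite Sg_perm].
rewrite card_in_imset ?finset.cardsX ?finset.cardsT ?card_Sn //.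
move=> [s f] [t g]; rewrite !finset.in_setX /= => /andP[_ /A0P[x [gx [ix Ef]]]].
move=> /andP[_ /A0P[x' [gx' [ix' Eg]]]] E.
have Ho : forall a b, (s a < s b)%N = (t a < t b)%N.
  move=> a b.
  have rd : rel2 (a, a) (b, b) by rewrite /rel2 /= !eqxx.
  have E2 : Sg (permx s x) = Sg (permx t x') by rewrite !Sg_perm Ef Eg.
  have := (SgP _ _).1 E2 _ _ rd.
  have md : forall z (u v : 'I_m), (mid z (u, u) < mid z (v, v)) = (co z u < co z v).
    by move=> z u v; rewrite /mid /=; apply/idP/idP; lra.
  by rewrite !md !co_permx (incr_lt ix) (incr_lt ix').
have est : s = t.
  apply/permP => j; apply: val_inj; apply/eqP; rewrite eqn_leq; apply/andP; split.
    have := @mono_ge (fun i => t ((s^-1)%g i)).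
    move=> /(_ _ (s j)); rewrite permK; apply.
    by move=> i k ik; rewrite -Ho !permKV.
  have := @mono_ge (fun i => s ((t^-1)%g i)).
  move=> /(_ _ (t j)); rewrite permK; apply.
  by move=> i k ik; rewrite Ho !permKV.
subst t; congr (_, _).
apply/ffunP => -[[a b] [c d]].
have := congr1 (fun F : Ft => F (((s^-1)%g a, (s^-1)%g b), ((s^-1)%g c, (s^-1)%g d))) E.
by rewrite !ffunE /= !permKV.
Qed.


Lemma r_eq : r R m = #|RPs|.
Proof.
apply: eq_card => P; apply/idP/idP => [/set_mem/asboolP [x [gx <-]] | /RPsP [x [gx <-]]].
  by apply/RPsP; exists x; split => //; apply/gen'_generic.
by apply/mem_set/asboolP; exists x; split => //; apply/gen'_generic.
Qed.

Lemma r0_eq : r0 R m = #|RP0s|.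
Proof.
apply: eq_card => P; apply/idP/idP => [/set_mem/asboolP [x [gx [ix <-]]] | /RP0sP [x [gx [ix <-]]]].
  by apply/RP0sP; exists x; split; [apply/gen'_generic|split].
by apply/mem_set/asboolP; exists x; split; [apply/gen'_generic|split].
Qed.

Definition pc (C : set 'rV[R]_m) : 'rV[R]_m :=
  match pselect (exists x, mid_complement R m x /\ C = connected_component (mid_complement R m) x) with
  | left h => proj1_sig (cid h)
  | right _ => 0
  end.

Lemma pcP C : chambers R m C ->
  mid_complement R m (pc C) /\ C = connected_component (mid_complement R m) (pc C).
Proof.
move=> [x cx ->]; rewrite /pc; case: pselect => [h|[]]; last by exists x.
exact: (proj2_sig (cid h)).
Qed.

Lemma chambers_card : (chambers R m #= `I_(#|Simg|))%card.
Proof.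
apply/card_set_bijP; exists (fun C => index (Sg (pc C)) (enum Simg)); split.
- move=> C Cc; have [cp _] := pcP Cc.
  rewrite /= cardE index_mem mem_enum; apply/SimgP; exists (pc C); split => //.
  exact/comp_iff.
- move=> C D Cc Dc E.
  have [cC eC] := pcP (set_mem Cc); have [cD eD] := pcP (set_mem Dc).
  have ES : Sg (pc C) = Sg (pc D).
    have iC : Sg (pc C) \in enum Simg by rewrite mem_enum; apply/SimgP; exists (pc C); split => //; exact/comp_iff.
    have iD : Sg (pc D) \in enum Simg by rewrite mem_enum; apply/SimgP; exists (pc D); split => //; exact/comp_iff.
    by rewrite -(nth_index (Sg 0) iC) -(nth_index (Sg 0) iD) E.
  rewrite eC eD; apply: same_connected_component.
  by apply: seg_in => //; apply/comp_iff.
- move=> k /= klt.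
  set f := nth (Sg 0) (enum Simg) k.
  have fS : f \in Simg by rewrite -mem_enum mem_nth // -cardE.
  have [x [gx Ex]] := SimgP _ fS.
  have chx : chambers R m (connected_component (mid_complement R m) x).
    by exists x => //; apply/comp_iff.
  exists (connected_component (mid_complement R m) x) => //.
  have [cp e] := pcP chx.
  have : connected_component (mid_complement R m) x (pc (connected_component (mid_complement R m) x)).
    by rewrite [X in X (pc _)]e; apply: connected_component_refl.
  move/(comp_sg gx) => <-; rewrite Ex /f index_uniq ?enum_uniq //.
  by rewrite -cardE.
Qed.

End Work.

Local Open Scope classical_set_scope.
Local Open Scope card_scope.

Theorem theorem3p2 (R : realType) (m : nat) (hm : (3 <= m)%N) :
  r R m = ((m`! %/ 2) * r0 R m)%N /\ chambers R m #= `I_(2 * r R m).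
Proof.
split.
- have h1 := card_Simg R hm; have h2 := card_Simg2 R hm.
  rewrite (r_eq R m) (r0_eq R m) -(card_A0 R hm).
  have d2 : (2 %| m`!)%N by apply: dvdn_fact; rewrite /= (leq_trans _ hm).
  move: h1 h2; rewrite -(divnK d2).
  set h := (m`! %/ 2)%N; nia.
- by rewrite (r_eq R m) -(card_Simg R hm); apply: chambers_card.
Qed.
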